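(* The intersection $\bigcap_{e\ge 1}\hat G^{(e)}$ equals $PGL_2(F)$ (viewed inside $\mathrm{Aut}(X_{PGL_2(F)})$), and $PGL_2(F)\subseteq \hat G^{(e+1)}\subseteq\hat G^{(e)}\subseteq \mathrm{Aut}(X_{PGL_2(F)})$ for all $e\ge1$.
   Context: Let $F$ be a non-archimedean local field with ring of integers $\mathfrak{o}$, uniformizer $\varpi$, and finite residue field of cardinality $q$. $X=X_{PGL_2(F)}$ is the Bruhat–Tits tree of $PGL_2(F)$: its vertices are homothety classes $[L]$ (under $F^\times$) of $\mathfrak{o}$-lattices $L\subset F^2$, and $[L],[L']$ are joined by an edge iff there are representatives with $\varpi L\subsetneq L'\subsetneq L$; it is a $(q+1)$-regular tree. $d$ is the path-length distance on vertices; $\mathrm{Aut}(X)$ is the group of distance-preserving bijections of the vertex set, with the topology of pointwise convergence. $GL_2(F)$ acts on lattices through its linear action on $F^2$, the centre acts trivially, and this gives an embedding $PGL_2(F)\hookrightarrow\mathrm{Aut}(X)$. For an edge $\eta=\{x_1,x_2\}$ and $e\ge1$, $B(\eta,e)=\{y: \min(d(y,x_1),d(y,x_2))\le e\}$. Define $\hat G^{(e)}=\{g\in\mathrm{Aut}(X):\ \text{for every edge }\eta\ \text{there is } g'\in PGL_2(F)\text{ with } g|_{B(\eta,e)}=g'|_{B(\eta,e)}\}$. *)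

(* Defs.v *)
From HB Require Import structures.
From mathcomp Require Import all_boot all_order all_algebra.
Set Implicit Arguments. Unset Strict Implicit. Unset Printing Implicit Defensive.
Import Order.TTheory GRing.Theory Num.Theory.
Local Open Scope ring_scope.

(* A field F with a normalized discrete valuation v : F^x -> Z (the value of
   v at 0 is irrelevant), complete, with finite residue field. *)

Definition in_o (F : fieldType) (v : F -> int) (x : F) : Prop :=
  x = 0 \/ 0 <= v x.

Definition in_m (F : fieldType) (v : F -> int) (x : F) : Prop :=
  x = 0 \/ 0 < v x.

Definition is_nonarch_local_field (F : fieldType) (v : F -> int) : Prop :=
  (forall x y : F, x != 0 -> y != 0 -> v (x * y) = v x + v y) /\
  (forall x y : F, x != 0 -> y != 0 -> x + y != 0 ->
      Num.min (v x) (v y) <= v (x + y)) /\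
  (forall n : int, exists x : F, x != 0 /\ v x = n) /\
  (forall u : nat -> F,
     (forall N : int, exists M : nat, forall m n : nat, (M <= m)%N -> (M <= n)%N ->
        u m = u n \/ N <= v (u m - u n)) ->
     exists l : F, forall N : int, exists M : nat, forall n : nat, (M <= n)%N ->
        u n = l \/ N <= v (u n - l)) /\
  (* finite residue field o / m *)
  (exists s : seq F, (forall y, y \in s -> in_o v y) /\
     forall x, in_o v x -> exists2 y, y \in s & in_m v (x - y)).

Definition vset (F : fieldType) := 'rV[F]_2 -> Prop.

Definition is_lattice (F : fieldType) (v : F -> int) (L : vset F) : Prop :=
  exists B : 'M[F]_2, B \in unitmx /\
    forall x, L x <-> exists a b : F, in_o v a /\ in_o v b /\
                 x = a *: row 0 B + b *: row 1 B.

Definition scale_set (F : fieldType) (c : F) (L : vset F) : vset F :=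
  fun x => exists y, L y /\ x = c *: y.

Definition img_set (F : fieldType) (g : 'M[F]_2) (L : vset F) : vset F :=
  fun x => exists y, L y /\ x = y *m g.

Definition strict_sub (F : fieldType) (A B : vset F) : Prop :=
  (forall x, A x -> B x) /\ exists x, B x /\ ~ A x.

Definition homclass (F : fieldType) (v : F -> int) (L : vset F) : vset F -> Prop :=
  fun L' => is_lattice v L' /\
    exists c : F, c != 0 /\ forall x, L' x <-> scale_set c L x.

(* vertices of the Bruhat-Tits tree: homothety classes of lattices *)
Definition vertex (F : fieldType) (v : F -> int) : Type :=
  { C : vset F -> Prop | exists L, is_lattice v L /\ C = homclass v L }.

Definition adj (F : fieldType) (v : F -> int) (x y : vertex v) : Prop :=
  exists (L L' : vset F) (pi : F),
    sval x L /\ sval y L' /\ pi != 0 /\ v pi = 1 /\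
    strict_sub (scale_set pi L) L' /\ strict_sub L' L.

Fixpoint walk (F : fieldType) (v : F -> int) (x y : vertex v) (k : nat) : Prop :=
  match k with
  | O => x = y
  | S k' => exists z, adj x z /\ walk z y k'
  end.

Definition dist_is (F : fieldType) (v : F -> int) (x y : vertex v) (n : nat) : Prop :=
  walk x y n /\ forall k, (k < n)%N -> ~ walk x y k.

Definition dist_le (F : fieldType) (v : F -> int) (x y : vertex v) (e : nat) : Prop :=
  exists k, (k <= e)%N /\ walk x y k.

Definition isAut (F : fieldType) (v : F -> int) (f : vertex v -> vertex v) : Prop :=
  bijective f /\ forall x y n, dist_is x y n <-> dist_is (f x) (f y) n.

Definition induced_by (F : fieldType) (v : F -> int) (g : 'M[F]_2)
  (f : vertex v -> vertex v) : Prop :=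
  forall (x : vertex v) (L : vset F), sval x L -> sval (f x) (img_set g L).

Definition inPGL (F : fieldType) (v : F -> int) (f : vertex v -> vertex v) : Prop :=
  exists g : 'M[F]_2, g \in unitmx /\ induced_by g f.

Definition in_ball (F : fieldType) (v : F -> int) (x1 x2 : vertex v) (e : nat)
  (y : vertex v) : Prop := dist_le y x1 e \/ dist_le y x2 e.

Definition Ghat (F : fieldType) (v : F -> int) (e : nat)
  (f : vertex v -> vertex v) : Prop :=
  isAut f /\
  forall x1 x2 : vertex v, adj x1 x2 ->
    exists f' : vertex v -> vertex v, inPGL f' /\
      forall y, in_ball x1 x2 e y -> f y = f' y.

(* Main.v *)
Require Import Defs.
From HB Require Import structures.
From mathcomp Require Import all_boot all_order all_algebra.
From mathcomp Require Import ring lra zify.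
From Stdlib Require Import FunctionalExtensionality PropExtensionality ProofIrrelevance ClassicalEpsilon.
Set Implicit Arguments. Unset Strict Implicit. Unset Printing Implicit Defensive.
Import Order.TTheory GRing.Theory Num.Theory.
Local Open Scope ring_scope.

Section Main.
Variable (F : fieldType) (v : F -> int).
Hypothesis vM : forall x y : F, x != 0 -> y != 0 -> v (x * y) = v x + v y.
Hypothesis vU : forall x y : F, x != 0 -> y != 0 -> x + y != 0 ->
      Num.min (v x) (v y) <= v (x + y).

Implicit Types (g : 'M[F]_2) (c d : F).

Definition ge (m : int) (x : F) := x = 0 \/ m <= v x.

Lemma v1 : v 1 = 0.
Proof.
have aux : forall a : int, a = a + a -> a = 0 by move=> a; lia.
apply: aux; have := vM (oner_neq0 F) (oner_neq0 F); rewrite mulr1; exact.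
Qed.

Lemma vN1 : v (-1) = 0.
Proof.
have h : (-1 : F) != 0 by rewrite oppr_eq0 oner_neq0.
have aux : forall a : int, 0 = a + a -> a = 0 by move=> a; lia.
apply: aux; have := vM h h; rewrite mulrNN mulr1 v1; exact.
Qed.

Lemma vN x : v (- x) = v x.
Proof.
have [->|hx] := eqVneq x 0; first by rewrite oppr0.
have h : (-1 : F) != 0 by rewrite oppr_eq0 oner_neq0.
by rewrite -mulN1r vM // vN1 add0r.
Qed.

Lemma vV x : x != 0 -> v (x^-1) = - v x.
Proof.
move=> hx; have hi : x^-1 != 0 by rewrite invr_eq0.
have aux : forall a b : int, 0 = a + b -> b = - a by move=> a b; lia.
apply: aux; have := vM hx hi; rewrite mulfV // v1; exact.
Qed.

Lemma ge0 m : ge m 0. Proof. by left. Qed.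

Lemma ge_le m n x : n <= m -> ge m x -> ge n x.
Proof. move=> h [->|h2]; [by left|right; lia]. Qed.

Lemma geD m x y : ge m x -> ge m y -> ge m (x + y).
Proof.
move=> [->|hx]; first by rewrite add0r.
move=> [->|hy]; first by rewrite addr0; right.
have [e0|ne] := eqVneq (x + y) 0; first by left.
have [->|nx] := eqVneq x 0; first by rewrite add0r; right.
have [->|ny] := eqVneq y 0; first by rewrite addr0; right.
right; have := vU nx ny ne.
case: (leP (v x) (v y)) => _; lia.
Qed.

Lemma geN m x : ge m x -> ge m (- x).
Proof. move=> [->|h]; [by rewrite oppr0; left|by right; rewrite vN]. Qed.

Lemma geB m x y : ge m x -> ge m y -> ge m (x - y).
Proof. by move=> hx hy; apply: geD => //; apply: geN. Qed.

Lemma geM m n x y : ge m x -> ge n y -> ge (m + n) (x * y).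
Proof.
move=> [->|hx]; first by rewrite mul0r; left.
move=> [->|hy]; first by rewrite mulr0; left.
have [->|nx] := eqVneq x 0; first by rewrite mul0r; left.
have [->|ny] := eqVneq y 0; first by rewrite mulr0; left.
right; rewrite vM //; lia.
Qed.

Lemma geMl m x y : ge 0 x -> ge m y -> ge m (x * y).
Proof. by move=> hx hy; have := geM hx hy; rewrite add0r. Qed.

Lemma geMr m x y : ge m x -> ge 0 y -> ge m (x * y).
Proof. by move=> hx hy; have := geM hx hy; rewrite addr0. Qed.

Lemma geV m x y : y != 0 -> ge m x -> ge (m - v y) (x / y).
Proof.
move=> ny hx; have hy : ge (- v y) (y^-1).
  by right; rewrite vV //.
by have := geM hx hy.
Qed.

Lemma ge1 m : m <= 0 -> ge m 1.
Proof. by move=> h; right; rewrite v1. Qed.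

Lemma ge_unit x : x != 0 -> v x = 0 -> ge 0 (x^-1).
Proof. by move=> nx h; right; rewrite vV // h. Qed.

Lemma not_ge m x : x != 0 -> v x < m -> ~ ge m x.
Proof. move=> nx h [e|h2]; [by move: nx; rewrite e eqxx|lia]. Qed.

Lemma ge1_1D x : ge 1 x -> 1 + x != 0.
Proof.
move=> hx; apply/negP => /eqP e.
have ex : x = -1 by apply/eqP; rewrite -addr_eq0 addrC e. rewrite ex in hx; case: hx => [/eqP|].
  by rewrite oppr_eq0 oner_eq0.
rewrite vN1; lia.
Qed.

Lemma ord2 (i : 'I_2) : i = 0 \/ i = 1.
Proof. case: i => [[|[|//]]] Hi; [left|right]; exact: val_inj. Qed.

Lemma mul2E m n (A : 'M[F]_(m, 2)) (B : 'M[F]_(2, n)) i j :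
  (A *m B) i j = A i 0 * B 0 j + A i 1 * B 1 j.
Proof.
have e0 : (ord0 : 'I_2) = 0 by apply: val_inj.
have e1 : lift ord0 (ord0 : 'I_1) = 1 :> 'I_2 by apply: val_inj.
by rewrite mxE big_ord_recl big_ord1 e0 e1.
Qed.

Definition intM m n (k : int) (A : 'M[F]_(m, n)) := forall i j, ge k (A i j).

Lemma intM_mul m p k l (A : 'M[F]_(m, 2)) (B : 'M[F]_(2, p)) :
  intM k A -> intM l B -> intM (k + l) (A *m B).
Proof. by move=> hA hB i j; rewrite mul2E; apply: geD; apply: geM. Qed.

Lemma intM_le m n k l (A : 'M[F]_(m, n)) : l <= k -> intM k A -> intM l A.
Proof. by move=> h hA i j; apply: ge_le (hA i j). Qed.

Lemma intM_add m n k (A B : 'M[F]_(m, n)) : intM k A -> intM k B -> intM k (A + B).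
Proof. by move=> hA hB i j; rewrite mxE; apply: geD. Qed.

Lemma intM_opp m n k (A : 'M[F]_(m, n)) : intM k A -> intM k (- A).
Proof. by move=> hA i j; rewrite mxE; apply: geN. Qed.

Lemma intM_sub m n k (A B : 'M[F]_(m, n)) : intM k A -> intM k B -> intM k (A - B).
Proof. by move=> hA hB; apply: intM_add => //; apply: intM_opp. Qed.

Lemma intM_scale m n k l c (A : 'M[F]_(m, n)) : ge k c -> intM l A -> intM (k + l) (c *: A).
Proof. by move=> hc hA i j; rewrite mxE; apply: geM. Qed.

Lemma intM1 n : intM 0 (1%:M : 'M[F]_n).
Proof. move=> i j; rewrite mxE; case: (i == j) => /=; [exact: ge1|exact: ge0]. Qed.

Lemma intM0 m n k : intM k (0 : 'M[F]_(m, n)).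
Proof. by move=> i j; rewrite mxE; left. Qed.

Definition det2 (A : 'M[F]_2) := A 0 0 * A 1 1 - A 0 1 * A 1 0.

Definition adj2 (A : 'M[F]_2) : 'M[F]_2 :=
  \matrix_(i, j) (if i == 0 then (if j == 0 then A 1 1 else - A 0 1)
                  else (if j == 0 then - A 1 0 else A 0 0)).

Lemma adj2E (A : 'M[F]_2) : A *m adj2 A = det2 A *: 1%:M /\ adj2 A *m A = det2 A *: 1%:M.
Proof.
split; apply/matrixP => i j; rewrite mul2E !mxE /det2;
 (case: (ord2 i) => ->; case: (ord2 j) => -> /=); rewrite ?mulr1 ?mulr0; ring.
Qed.

Lemma det2M (A B : 'M[F]_2) : det2 (A *m B) = det2 A * det2 B.
Proof. rewrite /det2 !mul2E; ring. Qed.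

Lemma intM_adj2 k (A : 'M[F]_2) : intM k A -> intM k (adj2 A).
Proof.
move=> hA i j; rewrite mxE.
case: (ord2 i) => ->; case: (ord2 j) => -> /=; try apply: geN; apply: hA.
Qed.

Lemma det2_ge k (A : 'M[F]_2) : intM k A -> ge (k + k) (det2 A).
Proof. move=> hA; rewrite /det2; apply: geB; apply: geM; apply: hA. Qed.


Definition eqv (A B : vset F) := forall x, A x <-> B x.

Lemma eqv_refl A : eqv A A. Proof. by []. Qed.
Lemma eqv_sym A B : eqv A B -> eqv B A. Proof. by move=> h x; split; move/h. Qed.
Lemma eqv_trans A B C : eqv A B -> eqv B C -> eqv A C.
Proof. by move=> h1 h2 x; rewrite h1 h2. Qed.

Definition LB (B : 'M[F]_2) : vset F := fun x => exists u : 'rV[F]_2, intM 0 u /\ x = u *m B.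

Definition rv2 (a b : F) : 'rV[F]_2 := \row_j (if j == 0 then a else b).

Lemma rv2_mul a b (B : 'M[F]_2) : rv2 a b *m B = a *: row 0 B + b *: row 1 B.
Proof.
by apply/rowP => j; rewrite mul2E !mxE /=.
Qed.

Lemma rv2_eta (u : 'rV[F]_2) : u = rv2 (u 0 0) (u 0 1).
Proof.
apply/rowP => j; rewrite !mxE; case: (ord2 j) => -> //=.
Qed.

Lemma intM_rv2 a b : in_o v a -> in_o v b -> intM 0 (rv2 a b).
Proof. move=> ha hb i j; rewrite mxE; case: (ord2 j) => -> //=. Qed.

Lemma lat_LB L : is_lattice v L <-> exists B, B \in unitmx /\ eqv L (LB B).
Proof.
split.
  case=> B [uB hB]; exists B; split => // x; rewrite hB; split.
    case=> a [b [ha [hb ->]]]; exists (rv2 a b); split; last by rewrite rv2_mul.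
    exact: intM_rv2.
  case=> u [hu ->]; exists (u 0 0), (u 0 1); split; first exact: hu.
  split; first exact: hu.
  by rewrite {1}[u]rv2_eta rv2_mul.
case=> B [uB hB]; exists B; split => // x; rewrite hB; split.
  case=> u [hu ->]; exists (u 0 0), (u 0 1); split; first exact: hu.
  split; first exact: hu.
  by rewrite {1}[u]rv2_eta rv2_mul.
case=> a [b [ha [hb ->]]]; exists (rv2 a b); split; last by rewrite rv2_mul.
exact: intM_rv2.
Qed.

Lemma LB_lat B : B \in unitmx -> is_lattice v (LB B).
Proof. by move=> uB; apply/lat_LB; exists B. Qed.

Lemma lat_eqv L L' : is_lattice v L -> eqv L L' -> is_lattice v L'.
Proof.
move=> /lat_LB [B [uB hB]] h; apply/lat_LB; exists B; split => //.
exact: eqv_trans (eqv_sym h) hB.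
Qed.

Lemma scale_eqv c A B : eqv A B -> eqv (scale_set c A) (scale_set c B).
Proof. by move=> h x; split; case=> y [hy ->]; exists y; split => //; apply/h. Qed.

Lemma img_eqv g A B : eqv A B -> eqv (img_set g A) (img_set g B).
Proof. by move=> h x; split; case=> y [hy ->]; exists y; split => //; apply/h. Qed.

Lemma scaleLB c B : eqv (scale_set c (LB B)) (LB (c *: B)).
Proof.
move=> x; split.
  by case=> y [[u [hu ->]] ->]; exists u; split => //; rewrite scalemxAr.
by case=> u [hu ->]; exists (u *m B); split; [exists u|rewrite scalemxAr].
Qed.

Lemma imgLB g B : eqv (img_set g (LB B)) (LB (B *m g)).
Proof.
move=> x; split.
  by case=> y [[u [hu ->]] ->]; exists u; split => //; rewrite mulmxA.
by case=> u [hu ->]; exists (u *m B); split; [exists u|rewrite mulmxA].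
Qed.

Lemma scale_scale c d A : eqv (scale_set c (scale_set d A)) (scale_set (c * d) A).
Proof.
move=> x; split.
  by case=> y [[z [hz ->]] ->]; exists z; split => //; rewrite scalerA.
by case=> z [hz ->]; exists (d *: z); split; [exists z|rewrite scalerA].
Qed.

Lemma scale1 A : eqv (scale_set 1 A) A.
Proof.
move=> x; split; first by case=> y [hy ->]; rewrite scale1r.
by move=> hx; exists x; rewrite scale1r.
Qed.

Lemma scaleK c A : c != 0 -> eqv (scale_set c^-1 (scale_set c A)) A.
Proof.
move=> nc; apply: eqv_trans (scale_scale _ _ _) _.
by rewrite mulVf //; apply: scale1.
Qed.

Lemma scale_img c g A : eqv (scale_set c (img_set g A)) (img_set g (scale_set c A)).
Proof.
move=> x; split.
  by case=> y [[z [hz ->]] ->]; exists (c *: z); split; [exists z|rewrite scalemxAl].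
by case=> y [[z [hz ->]] ->]; exists (z *m g); split; [exists z|rewrite scalemxAl].
Qed.

Lemma LB_sub X Y U : intM 0 U -> X = U *m Y -> forall x, LB X x -> LB Y x.
Proof.
move=> hU -> x [u [hu ->]]; exists (u *m U); split; last by rewrite mulmxA.
by have := intM_mul hu hU; rewrite addr0.
Qed.

Lemma vx (x : vertex v) : exists L0, is_lattice v L0 /\ forall M, sval x M <-> homclass v L0 M.
Proof. case: (proj2_sig x) => L0 [h e]; exists L0; split => // M; by rewrite e. Qed.

Lemma class_eqv (x : vertex v) L L' : sval x L -> eqv L L' -> sval x L'.
Proof.
have [L0 [hL0 hx]] := vx x.
move=> /hx [hL [c [nc hc]]] h; apply/hx; split; first exact: lat_eqv h.
by exists c; split => // z; rewrite -h hc.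
Qed.

Lemma class_scale (x : vertex v) L c : sval x L -> c != 0 -> sval x (scale_set c L).
Proof.
have [L0 [hL0 hx]] := vx x.
move=> /hx [hL [d [nd hd]]] nc; apply/hx; split.
  move: hL => /lat_LB [B [uB hB]].
  have uB' : (c *: B) \in unitmx by rewrite unitmxZ // unitfE.
  apply: lat_eqv (LB_lat uB') _.
  apply: eqv_sym; apply: eqv_trans (scale_eqv _ hB) _; exact: scaleLB.
exists (c * d); split; first by rewrite mulf_neq0.
apply: eqv_trans (scale_eqv _ hd) _; exact: scale_scale.
Qed.

Lemma class_same (x : vertex v) L1 L2 : sval x L1 -> sval x L2 ->
  exists c, c != 0 /\ eqv L2 (scale_set c L1).
Proof.
have [L0 [hL0 hx]] := vx x.
move=> /hx [h1 [c1 [n1 e1]]] /hx [h2 [c2 [n2 e2]]].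
exists (c2 / c1); split; first by rewrite mulf_neq0 // invr_eq0.
apply: eqv_trans e2 _.
have e : eqv (scale_set c1^-1 L1) L0.
  apply: eqv_trans (scale_eqv _ e1) _; exact: scaleK.
apply: eqv_sym; apply: eqv_trans (eqv_sym (scale_scale _ _ _)) _.
exact: scale_eqv.
Qed.

Lemma class_lat (x : vertex v) L : sval x L -> is_lattice v L.
Proof. have [L0 [hL0 hx]] := vx x. by case/hx. Qed.

Lemma vert_has (x : vertex v) : exists L, sval x L.
Proof.
have [L0 [hL0 hx]] := vx x.
exists L0; apply/hx; split => //.
exists 1; split; [exact: oner_neq0|exact: eqv_sym (scale1 _)].
Qed.

Definition mkv L (h : is_lattice v L) : vertex v :=
  exist _ (homclass v L) (ex_intro _ L (conj h erefl)).

Lemma mkv_in L (h : is_lattice v L) : sval (mkv h) L.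
Proof.
split => //; exists 1; split; [exact: oner_neq0|exact: eqv_sym (scale1 _)].
Qed.

Lemma vert_eq (x y : vertex v) L : sval x L -> sval y L -> x = y.
Proof.
move=> hx hy.
have key : forall (a b : vertex v) M, sval a L -> sval b L -> sval a M -> sval b M.
  move=> a b M ha hb hM.
  have [c [nc hc]] := class_same ha hM.
  apply: class_eqv (eqv_sym hc); exact: class_scale.
case: x y hx hy key => C hC [C' hC'] /= hx hy key.
have e : C = C'.
  apply: functional_extensionality => M; apply: propositional_extensionality.
  split => hM.
    exact: (key (exist _ C hC) (exist _ C' hC') M hx hy hM).
  exact: (key (exist _ C' hC') (exist _ C hC) M hy hx hM).
subst C'; congr exist; apply: proof_irrelevance.
Qed.


Lemma strict_eqv A A' B B' : eqv A A' -> eqv B B' -> strict_sub A B -> strict_sub A' B'.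
Proof.
move=> hA hB [h1 [x [h2 h3]]]; split.
  by move=> z /hA /h1 /hB.
by exists x; split; [apply/hB|move/hA].
Qed.

Lemma img_img g (h : 'M[F]_2) A : eqv (img_set h (img_set g A)) (img_set (g *m h) A).
Proof.
move=> x; split.
  by case=> y [[z [hz ->]] ->]; exists z; split => //; rewrite mulmxA.
by case=> z [hz ->]; exists (z *m g); split; [exists z|rewrite mulmxA].
Qed.

Lemma img1 A : eqv (img_set (1%:M : 'M[F]_2) A) A.
Proof.
move=> x; split; first by case=> y [hy ->]; rewrite mulmx1.
by move=> hx; exists x; rewrite mulmx1.
Qed.

Lemma img_invK g A : g \in unitmx -> eqv (img_set (invmx g) (img_set g A)) A.
Proof. move=> ug; apply: eqv_trans (img_img _ _ _) _; rewrite mulmxV //; exact: img1. Qed.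

Lemma img_Kinv g A : g \in unitmx -> eqv (img_set g (img_set (invmx g) A)) A.
Proof. move=> ug; apply: eqv_trans (img_img _ _ _) _; rewrite mulVmx //; exact: img1. Qed.

Lemma strict_img g A B : g \in unitmx -> strict_sub A B -> strict_sub (img_set g A) (img_set g B).
Proof.
move=> ug [h1 [x [h2 h3]]]; split.
  by move=> z [y [hy ->]]; exists y; split => //; apply: h1.
exists (x *m g); split; first by exists x.
case=> y [hy e]; apply: h3.
have -> : x = y by rewrite -(mulmxK ug x) e mulmxK.
done.
Qed.

Lemma strict_scale c A B : c != 0 -> strict_sub A B -> strict_sub (scale_set c A) (scale_set c B).
Proof.
move=> nc [h1 [x [h2 h3]]]; split.
  by move=> z [y [hy ->]]; exists y; split => //; apply: h1.
exists (c *: x); split; first by exists x.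
case=> y [hy e]; apply: h3.
have -> : x = y by rewrite -[x](scalerK nc) e scalerK.
done.
Qed.

Lemma img_lat g L : g \in unitmx -> is_lattice v L -> is_lattice v (img_set g L).
Proof.
move=> ug /lat_LB [B [uB hB]].
have uBg : (B *m g) \in unitmx by rewrite unitmx_mul uB ug.
apply: lat_eqv (LB_lat uBg) _; apply: eqv_sym; apply: eqv_trans (img_eqv _ hB) _.
exact: imgLB.
Qed.

Lemma adj_sym (x y : vertex v) : adj x y -> adj y x.
Proof.
case=> L [L' [pi [hx [hy [npi [vpi [s1 s2]]]]]]].
exists L', (scale_set pi L), pi; split => //; split; first exact: class_scale.
do 3 (split => //).
exact: strict_scale.
Qed.

Lemma adj_induced g f (x y : vertex v) : g \in unitmx -> induced_by g f -> adj x y -> adj (f x) (f y).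
Proof.
move=> ug hf [L [L' [pi [hx [hy [npi [vpi [s1 s2]]]]]]]].
exists (img_set g L), (img_set g L'), pi.
split; first exact: hf.
split; first exact: hf.
do 2 (split => //).
split; last exact: strict_img.
apply: strict_eqv (strict_img ug s1) => //; exact: eqv_sym (scale_img _ _ _).
Qed.

Lemma walk_induced g f (x y : vertex v) k : g \in unitmx -> induced_by g f -> walk x y k -> walk (f x) (f y) k.
Proof.
move=> ug hf; elim: k x => [|k IH] x /=; first by move=> ->.
case=> z [a w]; exists (f z); split; [exact: adj_induced ug hf a|exact: IH].
Qed.

Definition rep (x : vertex v) : vset F := proj1_sig (constructive_indefinite_description _ (vert_has x)).
Lemma rep_in (x : vertex v) : sval x (rep x).
Proof. exact: proj2_sig (constructive_indefinite_description _ (vert_has x)). Qed.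

Definition act g (ug : g \in unitmx) (x : vertex v) : vertex v :=
  mkv (img_lat ug (class_lat (rep_in x))).

Lemma act_induced g (ug : g \in unitmx) : induced_by g (act ug).
Proof.
move=> x L hL /=.
have [c [nc hc]] := class_same (rep_in x) hL.
split; first exact: img_lat (class_lat hL).
exists c; split => //.
apply: eqv_trans (img_eqv _ hc) _; exact: eqv_sym (scale_img _ _ _).
Qed.

Lemma pgl_isAut (f : vertex v -> vertex v) : inPGL f -> isAut f.
Proof.
case=> g [ug hf].
have ui : invmx g \in unitmx by rewrite unitmx_inv.
set h := act ui.
have hh := act_induced ui.
have c1 : cancel f h.
  move=> x; have [L hL] := vert_has x.
  apply: (@vert_eq _ _ L); last exact: hL.
  apply: class_eqv (hh _ _ (hf _ _ hL)) _; exact: img_invK.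
have c2 : cancel h f.
  move=> y; have [L hL] := vert_has y.
  apply: (@vert_eq _ _ L); last exact: hL.
  apply: class_eqv (hf _ _ (hh _ _ hL)) _; exact: img_Kinv.
split; first by exists h.
move=> x y n; split.
  case=> w hmin; split; first exact: walk_induced ug hf w.
  by move=> k hk w2; apply: (hmin k hk); rewrite -(c1 x) -(c1 y); exact: walk_induced ui hh w2.
case=> w hmin; split.
  by rewrite -(c1 x) -(c1 y); exact: walk_induced ui hh w.
by move=> k hk w2; apply: (hmin k hk); exact: walk_induced ug hf w2.
Qed.


Definition mk2 (a b c d : F) : 'M[F]_2 :=
  \matrix_(i, j) (if i == 0 then (if j == 0 then a else b) else (if j == 0 then c else d)).

Lemma mk2E a b c d : [/\ mk2 a b c d 0 0 = a, mk2 a b c d 0 1 = b,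
  mk2 a b c d 1 0 = c & mk2 a b c d 1 1 = d].
Proof. by rewrite !mxE. Qed.

Lemma rv2E a b : rv2 a b 0 0 = a /\ rv2 a b 0 1 = b.
Proof. by rewrite !mxE. Qed.

Lemma vX pi n : pi != 0 -> v pi = 1 -> pi ^+ n != 0 /\ v (pi ^+ n) = n%:Z.
Proof.
move=> np vp; elim: n => [|n [nz IH]]; first by rewrite expr0 oner_neq0 v1.
rewrite exprS mulf_neq0 //; split => //; rewrite vM // vp IH; lia.
Qed.

Lemma one_not_pi pi u : v pi = 1 -> ge 0 u -> 1 <> u * pi.
Proof.
move=> vp hu e; have hp : ge 1 pi by right; rewrite vp.
have : ge 1 (u * pi) by exact: geMl hu hp.
rewrite -e => [[/eqP|]]; [by rewrite oner_eq0|rewrite v1; lia].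
Qed.

Lemma lat_add L a b : is_lattice v L -> L a -> L b -> L (a + b).
Proof.
move=> /lat_LB [B [uB hB]] /hB [u [hu ->]] /hB [w [hw ->]]; apply/hB.
exists (u + w); split; [exact: intM_add|by rewrite mulmxDl].
Qed.

Lemma det2_1D (Y : 'M[F]_2) : det2 (1%:M + Y) = 1 + (Y 0 0 + Y 1 1 + det2 Y).
Proof. rewrite /det2 !mxE /=; ring. Qed.

Lemma unit1D z : ge 1 z -> 1 + z != 0 /\ v (1 + z) = 0.
Proof.
move=> hz; have nz := ge1_1D hz; split => //.
have h0 : ge 0 (1 + z) by apply: geD; [exact: ge1|exact: ge_le hz].
case: h0 => [/eqP|h0]; first by rewrite (negbTE nz).
have : ~ ge 1 (1 + z).
  move=> h1; have := geB h1 hz; rewrite addrK => [[/eqP|]]; [by rewrite oner_eq0|rewrite v1; lia].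
move=> h1; have : ~ (1 <= v (1 + z)) by move=> h; apply: h1; right.
lia.
Qed.

Definition inv2 (A : 'M[F]_2) := (det2 A)^-1 *: adj2 A.

Lemma inv2E (A : 'M[F]_2) : det2 A != 0 -> A *m inv2 A = 1%:M /\ inv2 A *m A = 1%:M.
Proof.
move=> nd; have [h1 h2] := adj2E A; rewrite /inv2; split.
  by rewrite -scalemxAr h1 scalerA mulVf // scale1r.
by rewrite -scalemxAl h2 scalerA mulVf // scale1r.
Qed.

Lemma inv2_int (A : 'M[F]_2) : intM 0 A -> det2 A != 0 -> v (det2 A) = 0 -> intM 0 (inv2 A).
Proof.
move=> hA nd vd; have := intM_scale (ge_unit nd vd) (intM_adj2 hA); rewrite addr0; exact.
Qed.

Lemma inv1D m (Y : 'M[F]_2) : 1 <= m -> intM m Y ->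
  exists Y', intM m Y' /\ (1%:M + Y') *m (1%:M + Y) = 1%:M /\ (1%:M + Y) *m (1%:M + Y') = 1%:M.
Proof.
move=> hm hY.
have hz : ge 1 (Y 0 0 + Y 1 1 + det2 Y).
  apply: geD; first by apply: geD; apply: ge_le (hY _ _); lia.
  by apply: ge_le (det2_ge hY); lia.
have [nd vd] := unit1D hz; rewrite -det2_1D in nd vd.
have hI : intM 0 (1%:M + Y) by apply: intM_add; [exact: intM1|apply: (intM_le _ hY); lia].
have hZ := inv2_int hI nd vd.
have [e1 e2] := inv2E nd.
exists (inv2 (1%:M + Y) - 1%:M).
have e : 1%:M + (inv2 (1%:M + Y) - 1%:M) = inv2 (1%:M + Y) by rewrite addrC subrK.
rewrite e; split => //.
have -> : inv2 (1%:M + Y) - 1%:M = - (inv2 (1%:M + Y) *m Y).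
  by rewrite -{2}e2 mulmxDr mulmx1 opprD addrA subrr add0r.
by apply: intM_opp; have := intM_mul hZ hY; rewrite add0r.
Qed.

Definition bnd (k : int) (L : vset F) :=
  is_lattice v L /\ (forall x, L x -> intM 0 x) /\ (forall x, intM k x -> L x).

Lemma fix_in k m L (Y : 'M[F]_2) : bnd k L -> k <= m -> intM m Y ->
  forall x, L x -> L (x *m (1%:M + Y)).
Proof.
move=> [hL [h1 h2]] km hY x hx; rewrite mulmxDr mulmx1; apply: lat_add => //.
apply: h2; apply: intM_le (intM_mul (h1 _ hx) hY); lia.
Qed.

Lemma fixT k m L (Y : 'M[F]_2) : bnd k L -> k <= m -> 1 <= m -> intM m Y ->
  eqv (img_set (1%:M + Y) L) L.
Proof.
move=> hb km hm hY x; split.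
  by case=> y [hy ->]; exact: fix_in hb km hY y hy.
move=> hx; have [Y' [hY' [e1 e2]]] := inv1D hm hY.
exists (x *m (1%:M + Y')); split; first exact: fix_in hb km hY' x hx.
by rewrite -mulmxA e1 mulmx1.
Qed.


Lemma u1 : (1%:M : 'M[F]_2) \in unitmx. Proof. exact: unitmx1. Qed.
Definition x0 : vertex v := mkv (LB_lat u1).

Lemma LB1 x : LB 1%:M x <-> intM 0 x.
Proof.
split; first by case=> u [hu ->]; rewrite mulmx1.
by move=> hx; exists x; rewrite mulmx1.
Qed.

Lemma walkW k : forall y, walk y x0 k -> exists L, sval y L /\ bnd k%:Z L.
Proof.
elim: k => [|k IH] y /=.
  move=> ->; exists (LB 1%:M); split; first exact: mkv_in.
  split; first exact: LB_lat u1.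
  by split => x; move/LB1.
case=> z [[L1 [L2 [p [h1 [h2 [np [vp [[s1a _] [s2a _]]]]]]]]] w].
have [Lz [hz [lz [bz1 bz2]]]] := IH z w.
have [c [nc hc]] := class_same hz h2.
have npc : p / c != 0 by rewrite mulf_neq0 // invr_eq0.
exists (scale_set (p / c) L1); split; first exact: class_scale.
split; first exact: class_lat (class_scale h1 npc).
split.
  move=> x [l [hl ->]].
  have : L2 (p *: l) by apply: s1a; exists l.
  move/hc => [zz [hzz e]].
  have -> : (p / c) *: l = zz.
    by rewrite mulrC -scalerA e scalerA mulVf // scale1r.
  exact: bz1.
move=> x hx.
have hpi : ge (-1) (p^-1) by right; rewrite vV // vp.
have hx' : intM k (p^-1 *: x).
  by apply: (intM_le _ (intM_scale hpi hx)); lia.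
have : L2 (c *: (p^-1 *: x)) by apply/hc; exists (p^-1 *: x); split => //; apply: bz2.
move/s2a => hl1; exists (c *: (p^-1 *: x)); split => //.
by rewrite !scalerA divfK // mulfV // scale1r.
Qed.

Lemma strict_LB (X Y U : 'M[F]_2) w : intM 0 U -> X = U *m Y -> LB Y w -> ~ LB X w ->
  strict_sub (LB X) (LB Y).
Proof. move=> hU e hw hn; split; [exact: LB_sub hU e|by exists w]. Qed.

Lemma notLB pi (X : 'M[F]_2) (w : 'rV[F]_2) j : v pi = 1 -> (forall i, exists t, ge 0 t /\ X i j = t * pi) ->
  w 0 j = 1 -> ~ LB X w.
Proof.
move=> vp hX hw [u [hu e]].
have [t0 [ht0 e0]] := hX 0; have [t1 [ht1 e1]] := hX 1.
apply: (one_not_pi (u := u 0 0 * t0 + u 0 1 * t1) vp).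
  by apply: geD; apply: geMl => //; apply: hu.
by rewrite -hw e mul2E e0 e1; ring.
Qed.

Lemma ge0_cases x : ge 0 x -> ge 1 x \/ (x != 0 /\ v x = 0).
Proof.
case=> [->|h]; first by left; left.
have [->|nx] := eqVneq x 0; first by left; left.
have [h1|h1] := leP 1 (v x); first by left; right.
right; split => //; lia.
Qed.

Definition Ea pi l := mk2 pi l 0 1.
Definition Eb pi := mk2 1 0 0 pi.

Lemma mxeq (A B : 'M[F]_2) : A 0 0 = B 0 0 -> A 0 1 = B 0 1 -> A 1 0 = B 1 0 -> A 1 1 = B 1 1 -> A = B.
Proof.
move=> h00 h01 h10 h11; apply/matrixP => i j.
by case: (ord2 i) => ->; case: (ord2 j) => ->.
Qed.

Lemma rveq (A B : 'rV[F]_2) : A 0 0 = B 0 0 -> A 0 1 = B 0 1 -> A = B.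
Proof. move=> h0 h1; apply/rowP => j; by case: (ord2 j) => ->. Qed.

Lemma intM_mk2 k a b c d : ge k a -> ge k b -> ge k c -> ge k d -> intM k (mk2 a b c d).
Proof. move=> ha hb hc hd i j; rewrite mxE; by case: (ord2 i) => ->; case: (ord2 j) => ->. Qed.

Lemma strictE pi E : pi != 0 -> v pi = 1 ->
  ((exists l, ge 0 l /\ E = Ea pi l) \/ E = Eb pi) ->
  strict_sub (LB (pi%:M)) (LB E) /\ strict_sub (LB E) (LB 1%:M) /\ det2 E = pi /\ intM 0 E.
Proof.
move=> np vp hE.
have hp : ge 0 pi by right; rewrite vp.
have g1 := ge1 (lexx (0:int)).
case: hE => [[l [hl ->]]|->].
  split.
    apply: (@strict_LB _ _ (mk2 1 (-l) 0 pi) (rv2 0 1)).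
    - by apply: intM_mk2 => //; (exact: ge0 || exact: g1 || exact: geN).
    - by apply: mxeq; rewrite mul2E !mxE /=; ring.
    - by exists (rv2 0 1); split; [apply: intM_rv2; [exact: ge0|exact: g1]|apply: rveq; rewrite mul2E !mxE /=; ring].
    - apply: (@notLB pi _ _ 1) => //; last by rewrite mxE.
      move=> i; case: (ord2 i) => ->; rewrite mxE /= ?mulr1n ?mulr0n; [exists 0; split; [exact: ge0|ring]|exists 1; split; [exact: g1|ring]].
  split.
    apply: (@strict_LB _ _ (Ea pi l) (rv2 1 0)).
    - by apply: intM_mk2 => //; (exact: ge0 || exact: g1 || exact: geN).
    - by rewrite mulmx1.
    - by apply/LB1; apply: intM_rv2; [exact: g1|exact: ge0].
    - apply: (@notLB pi _ _ 0) => //; last by rewrite mxE.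
      move=> i; case: (ord2 i) => ->; rewrite mxE /= ?mulr1n ?mulr0n; [exists 1; split; [exact: g1|ring]|exists 0; split; [exact: ge0|ring]].
  split; first by rewrite /det2 !mxE /=; ring.
  by apply: intM_mk2 => //; (exact: ge0 || exact: g1 || exact: geN).
split.
  apply: (@strict_LB _ _ (mk2 pi 0 0 1) (rv2 1 0)).
  - by apply: intM_mk2 => //; (exact: ge0 || exact: g1 || exact: geN).
  - by apply: mxeq; rewrite mul2E !mxE /=; ring.
  - by exists (rv2 1 0); split; [apply: intM_rv2; [exact: g1|exact: ge0]|apply: rveq; rewrite mul2E !mxE /=; ring].
  - apply: (@notLB pi _ _ 0) => //; last by rewrite mxE.
    move=> i; case: (ord2 i) => ->; rewrite mxE /= ?mulr1n ?mulr0n; [exists 1; split; [exact: g1|ring]|exists 0; split; [exact: ge0|ring]].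
split.
  apply: (@strict_LB _ _ (Eb pi) (rv2 0 1)).
  - by apply: intM_mk2 => //; (exact: ge0 || exact: g1 || exact: geN).
  - by rewrite mulmx1.
  - by apply/LB1; apply: intM_rv2; [exact: ge0|exact: g1].
  - apply: (@notLB pi _ _ 1) => //; last by rewrite mxE.
    move=> i; case: (ord2 i) => ->; rewrite mxE /= ?mulr1n ?mulr0n; [exists 0; split; [exact: ge0|ring]|exists 1; split; [exact: g1|ring]].
split; first by rewrite /det2 !mxE /=; ring.
by apply: intM_mk2 => //; (exact: ge0 || exact: g1 || exact: geN).
Qed.


Lemma factor pi B : pi != 0 -> v pi = 1 -> intM 0 B -> ge 1 (det2 B) ->
  exists E B', B = E *m B' /\ intM 0 B' /\
    ((exists l, ge 0 l /\ E = Ea pi l) \/ E = Eb pi).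
Proof.
move=> np vp hB hd.
have hpi : ge (- 1) (pi^-1) by right; rewrite vV // vp.
have divp : forall x, ge 1 x -> ge 0 (x / pi).
  by move=> x hx; have := geM hx hpi; rewrite addrN.
set a := B 0 0; set b := B 0 1; set c := B 1 0; set d := B 1 1.
have ha : ge 0 a := hB 0 0; have hb : ge 0 b := hB 0 1.
have hc : ge 0 c := hB 1 0; have hdd : ge 0 d := hB 1 1.
have eB : B = mk2 a b c d by apply: mxeq; rewrite !mxE.
have hdet : det2 B = a * d - b * c by [].
case: (ge0_cases hc) => [c1|[nc vc]].
  case: (ge0_cases hdd) => [d1|[nd vd]].
    exists (Eb pi), (mk2 a b (c / pi) (d / pi)); split.
      by rewrite eB; apply: mxeq; rewrite mul2E !mxE /=; field; rewrite ?np ?nd ?nc.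
    by split; [apply: intM_mk2 => //; apply: divp; [exact: c1|exact: d1]|right].
  exists (Ea pi (b / d)), (mk2 ((a - b / d * c) / pi) ((b - b / d * d) / pi) c d); split.
    by rewrite eB; apply: mxeq; rewrite mul2E !mxE /=; field; rewrite ?np ?nd ?nc.
  split; last by left; exists (b / d); split => //; apply: geMr hb (ge_unit nd vd).
  apply: intM_mk2 => //; apply: divp.
    have -> : a - b / d * c = (a * d - b * c) / d by field; rewrite ?nd.
    by rewrite -hdet; apply: geMr hd (ge_unit nd vd).
  by rewrite divfK // subrr; exact: ge0.
exists (Ea pi (a / c)), (mk2 ((a - a / c * c) / pi) ((b - a / c * d) / pi) c d); split.
  by rewrite eB; apply: mxeq; rewrite mul2E !mxE /=; field; rewrite ?np ?nd ?nc.
split; last by left; exists (a / c); split => //; apply: geMr ha (ge_unit nc vc).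
apply: intM_mk2 => //; apply: divp.
  by rewrite divfK // subrr; exact: ge0.
have -> : b - a / c * d = - ((a * d - b * c) / c) by field; rewrite ?nc.
by rewrite -hdet; apply: geN; apply: geMr hd (ge_unit nc vc).
Qed.

Lemma det2_1 : det2 (1%:M : 'M[F]_2) = 1.
Proof. by rewrite /det2 !mxE /=; ring. Qed.

Lemma det2_unit (B : 'M[F]_2) : B \in unitmx -> det2 B != 0.
Proof.
move=> uB; have := det2M B (invmx B); rewrite mulmxV // det2_1 => e.
apply/negP => /eqP e0; move: e; rewrite e0 mul0r => e.
by move: (oner_neq0 F); rewrite -e eqxx.
Qed.

Lemma det2_unitmx (B : 'M[F]_2) : det2 B != 0 -> B \in unitmx.
Proof. by move=> nd; have [e _] := inv2E nd; case: (mulmx1_unit e). Qed.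

Lemma adj_step pi (E B' : 'M[F]_2) (y z : vertex v) : B' \in unitmx ->
  strict_sub (LB (pi%:M)) (LB E) -> strict_sub (LB E) (LB 1%:M) -> pi != 0 -> v pi = 1 ->
  sval z (LB B') -> sval y (LB (E *m B')) -> adj y z.
Proof.
move=> uB s1 s2 np vp hz hy; apply: adj_sym.
exists (LB B'), (LB (E *m B')), pi.
split; first exact: hz.
split; first exact: hy.
do 2 (split => //).
split.
  apply: strict_eqv (strict_img uB s1).
    apply: eqv_trans (imgLB _ _) _; rewrite mul_scalar_mx.
    exact: eqv_sym (scaleLB _ _).
  exact: imgLB.
apply: strict_eqv (strict_img uB s2); first exact: imgLB.
by apply: eqv_trans (imgLB _ _) _; rewrite mul1mx.
Qed.

Lemma conn pi n : pi != 0 -> v pi = 1 -> forall B, intM 0 B -> det2 B != 0 ->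
  v (det2 B) = n%:Z -> forall y, sval y (LB B) -> walk y x0 n.
Proof.
move=> np vp; elim: n => [|n IH] B hB nd vd y hy /=.
  have hZ := inv2_int hB nd vd; have [e1 e2] := inv2E nd.
  have e : eqv (LB B) (LB 1%:M).
    move=> x; split.
      by apply: (LB_sub hB); rewrite mulmx1.
    by apply: (LB_sub hZ); rewrite e2.
  exact: vert_eq (class_eqv hy e) (mkv_in _).
have hd1 : ge 1 (det2 B) by right; rewrite vd; lia.
have [E [B' [eB [hB' hE]]]] := factor np vp hB hd1.
have [s1 [s2 [dE iE]]] := strictE np vp hE.
have eD : det2 B = pi * det2 B' by rewrite eB det2M dE.
have nd' : det2 B' != 0 by apply/eqP => e0; move: nd; rewrite eD e0 mulr0 eqxx.
have vd' : v (det2 B') = n%:Z.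
  have := vd; rewrite eD vM // vp; lia.
have uB' := det2_unitmx nd'.
exists (mkv (LB_lat uB')); split.
  by apply: (adj_step uB' s1 s2 np vp (mkv_in _)); rewrite -eB.
exact: IH hB' nd' vd' _ (mkv_in _).
Qed.

Lemma conn_all pi (y : vertex v) : pi != 0 -> v pi = 1 -> exists k, walk y x0 k.
Proof.
move=> np vp.
have [L hL] := vert_has y.
have [B0 [uB hB]] := (lat_LB L).1 (class_lat hL).
have hy0 : sval y (LB B0) := class_eqv hL hB.
set N := addn (addn (addn (absz (v (B0 0 0))) (absz (v (B0 0 1)))) (absz (v (B0 1 0)))) (absz (v (B0 1 1))).
have [ncN vcN] := vX N np vp.
set c := pi ^+ N in ncN vcN.
have hB' : intM 0 (c *: B0).
  move=> i j; rewrite mxE.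
  have [->|nb] := eqVneq (B0 i j) 0; first by rewrite mulr0; left.
  right; rewrite vM // vcN /N.
  have aux : forall a b c1 d : int, let M := Posz (addn (addn (addn (absz a) (absz b)) (absz c1)) (absz d)) in
     [/\ 0 <= M + a, 0 <= M + b, 0 <= M + c1 & 0 <= M + d] by move=> a b c1 d /=; split; lia.
  have [h1 h2 h3 h4] := aux (v (B0 0 0)) (v (B0 0 1)) (v (B0 1 0)) (v (B0 1 1)).
  by case: (ord2 i) => ->; case: (ord2 j) => ->.
have nd0 := det2_unit uB.
have nd : det2 (c *: B0) != 0.
  have -> : det2 (c *: B0) = c ^+ 2 * det2 B0 by rewrite /det2 !mxE; ring.
  by rewrite mulf_neq0 // expf_neq0.
have hy : sval y (LB (c *: B0)) by apply: class_eqv (class_scale hy0 ncN) _; exact: scaleLB.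
have := det2_ge hB'; rewrite addr0 => -[e|h0]; first by move: nd; rewrite e eqxx.
exists `|v (det2 (c *: B0))|%N.
apply: (conn np vp hB' nd) hy.
lia.
Qed.


Lemma scaleE m n a (A : 'M[F]_(m, n)) i j : (a *: A) i j = a * A i j.
Proof. by rewrite mxE. Qed.

Definition stabD (D h : 'M[F]_2) := exists c U, c != 0 /\ intM 0 U /\ det2 U != 0 /\
   v (det2 U) = 0 /\ D *m h = c *: (U *m D).

Lemma unit_prod a b : ge 0 a -> ge 0 b -> a * b = 1 -> a != 0 /\ v a = 0.
Proof.
move=> ha hb e.
have na : a != 0 by apply/eqP => a0; move: e; rewrite a0 mul0r => /eqP; rewrite eq_sym oner_eq0.
have nb : b != 0 by apply/eqP => b0; move: e; rewrite b0 mulr0 => /eqP; rewrite eq_sym oner_eq0.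
split => //; have := vM na nb; rewrite e v1.
case: ha => [/eqP|ha]; first by rewrite (negbTE na).
case: hb => [/eqP|hb]; first by rewrite (negbTE nb).
lia.
Qed.

Lemma det2Z c (A : 'M[F]_2) : det2 (c *: A) = c ^+ 2 * det2 A.
Proof. by rewrite /det2 !mxE; ring. Qed.

Lemma lam_lemma (D U0 U1 : 'M[F]_2) c0 c1 : det2 D != 0 -> c0 != 0 -> c1 != 0 ->
  det2 U0 != 0 -> v (det2 U0) = 0 -> det2 U1 != 0 -> v (det2 U1) = 0 ->
  D *m (c0 *: U0) = c1 *: (U1 *m D) -> ge 0 (c1 / c0) /\ D *m U0 = (c1 / c0) *: (U1 *m D).
Proof.
move=> nD n0 n1 nU0 vU0 nU1 vU1 e.
split.
  have e2 : c0 ^+ 2 * det2 U0 = c1 ^+ 2 * det2 U1.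
    have := congr1 det2 e; rewrite det2M !det2Z det2M => e'.
    apply: (mulfI nD); rewrite e'; ring.
  have n02 : c0 ^+ 2 != 0 by rewrite expf_neq0.
  have n12 : c1 ^+ 2 != 0 by rewrite expf_neq0.
  have := congr1 v e2; rewrite !vM // vU0 vU1 => ev.
  right; rewrite vM ?invr_eq0 // vV //; lia.
apply: (scalerI n0); rewrite scalemxAr e scalerA mulrC divfK //.
Qed.

Lemma S_lemma (q : F) (e : int) (h : 'M[F]_2) : q != 0 -> v q = e -> 1 <= e ->
  stabD 1%:M h -> stabD (mk2 1 0 0 q) h -> stabD (mk2 q 0 0 1) h -> stabD (mk2 1 1 0 q) h ->
  exists s X, s != 0 /\ intM e X /\ h = s *: (1%:M + X).
Proof.
move=> nq vq he [c0 [U0 [n0 [hU0 [nU0 [vU0 e0]]]]]] s1 s2 s3.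
rewrite mul1mx mulmx1 in e0.
have hq : ge e q by right; rewrite vq.
have key : forall D, det2 D != 0 -> stabD D h ->
    exists l U1, ge 0 l /\ intM 0 U1 /\ D *m U0 = l *: (U1 *m D).
  move=> D nD [c1 [U1 [n1 [hU1 [nU1 [vU1 e1]]]]]]; rewrite e0 in e1.
  have [hl el] := lam_lemma nD n0 n1 nU0 vU0 nU1 vU1 e1.
  by exists (c1 / c0), U1.
have d1 : det2 (mk2 1 0 0 q) != 0 by rewrite /det2 !mxE /= mul0r subr0 mul1r.
have d2 : det2 (mk2 q 0 0 1) != 0 by rewrite /det2 !mxE /= mul0r subr0 mulr1.
have d3 : det2 (mk2 1 1 0 q) != 0 by rewrite /det2 !mxE /= mulr0 subr0 mul1r.
rewrite e0.
have [l1 [U1 [hl1 [hU1 E1]]]] := key _ d1 s1.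
have [l2 [U2 [hl2 [hU2 E2]]]] := key _ d2 s2.
have [l3 [U3 [hl3 [hU3 E3]]]] := key _ d3 s3.
have eb : U0 0 1 = l1 * U1 0 1 * q.
  have := congr1 (fun M : 'M[F]_2 => M 0 1) E1; rewrite /= scaleE !mul2E !mxE /= => E.
  transitivity (1 * U0 0 1 + 0 * U0 1 1); first ring.
  rewrite E; ring.
have ex : U0 1 0 = l2 * U2 1 0 * q.
  have := congr1 (fun M : 'M[F]_2 => M 1 0) E2; rewrite /= scaleE !mul2E !mxE /= => E.
  transitivity (0 * U0 0 0 + 1 * U0 1 0); first ring.
  rewrite E; ring.
have e00 : U0 0 0 = l3 * U3 0 0 - U0 1 0.
  have := congr1 (fun M : 'M[F]_2 => M 0 0) E3; rewrite /= scaleE !mul2E !mxE /= => E.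
  transitivity ((1 * U0 0 0 + 1 * U0 1 0) - U0 1 0); first ring.
  rewrite E; ring.
have e01 : U0 1 1 = l3 * U3 0 0 + l3 * U3 0 1 * q - U0 0 1.
  have := congr1 (fun M : 'M[F]_2 => M 0 1) E3; rewrite /= scaleE !mul2E !mxE /= => E.
  transitivity ((1 * U0 0 1 + 1 * U0 1 1) - U0 0 1); first ring.
  rewrite E; ring.
have gb : ge e (U0 0 1).
  rewrite eb; have := geM (geM hl1 (hU1 0 1)) hq; rewrite !add0r; exact.
have gx : ge e (U0 1 0).
  rewrite ex; have := geM (geM hl2 (hU2 1 0)) hq; rewrite !add0r; exact.
have gda : ge e (U0 1 1 - U0 0 0).
  have -> : U0 1 1 - U0 0 0 = l3 * U3 0 1 * q - U0 0 1 + U0 1 0 by rewrite e01 e00; ring.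
  apply: geD => //; apply: geB => //.
  have := geM (geM hl3 (hU3 0 1)) hq; rewrite !add0r; exact.
have ha : ge 0 (U0 0 0) := hU0 0 0.
case: (ge0_cases ha) => [a1|[na va]].
  exfalso.
  have gd : ge 1 (U0 1 1).
    have -> : U0 1 1 = U0 0 0 + (U0 1 1 - U0 0 0) by ring.
    by apply: geD => //; apply: ge_le gda.
  have : ge 1 (det2 U0).
    rewrite /det2; apply: geB.
      by apply: ge_le (geM a1 gd); lia.
    by apply: ge_le (geM gb gx); lia.
  by apply: not_ge => //; rewrite vU0.
exists (c0 * U0 0 0), ((U0 0 0)^-1 *: mk2 0 (U0 0 1) (U0 1 0) (U0 1 1 - U0 0 0)); split.
  by rewrite mulf_neq0.
split.
  have := intM_scale (ge_unit na va) (intM_mk2 (ge0 e) gb gx gda); rewrite add0r; exact.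
by apply: mxeq; rewrite !mxE /=; field; rewrite ?na.
Qed.

Lemma LB_sub_mat (X Y : 'M[F]_2) : (forall x, LB X x -> LB Y x) -> exists U, intM 0 U /\ X = U *m Y.
Proof.
move=> h.
have g1 := ge1 (lexx (0:int)).
have [u0 [hu0 e0]] := h (rv2 1 0 *m X) (ex_intro _ _ (conj (intM_rv2 g1 (ge0 0)) erefl)).
have [u1 [hu1 e1]] := h (rv2 0 1 *m X) (ex_intro _ _ (conj (intM_rv2 (ge0 0) g1) erefl)).
exists (mk2 (u0 0 0) (u0 0 1) (u1 0 0) (u1 0 1)); split.
  by apply: intM_mk2; [exact: hu0|exact: hu0|exact: hu1|exact: hu1].
have E0 := fun j => congr1 (fun M : 'rV[F]_2 => M 0 j) e0.
have E1 := fun j => congr1 (fun M : 'rV[F]_2 => M 0 j) e1.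
apply: mxeq; rewrite !mul2E !mxE /=.
- have := E0 0; rewrite /= !mul2E !mxE /= => <-; ring.
- have := E0 1; rewrite /= !mul2E !mxE /= => <-; ring.
- have := E1 0; rewrite /= !mul2E !mxE /= => <-; ring.
- have := E1 1; rewrite /= !mul2E !mxE /= => <-; ring.
Qed.


Lemma imgZ c g A : eqv (img_set (c *: g) A) (scale_set c (img_set g A)).
Proof.
move=> x; split.
  by case=> y [hy ->]; exists (y *m g); split; [exists y|rewrite scalemxAr].
by case=> z [[y [hy ->]] ->]; exists y; split => //; rewrite scalemxAr.
Qed.

Lemma agree_stab (w : vertex v) g g' D : g \in unitmx -> D \in unitmx ->
  sval w (img_set g (LB D)) -> sval w (img_set g' (LB D)) -> stabD D (g' *m invmx g).
Proof.
move=> ug uD h1 h2.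
have [c [nc hc]] := class_same h1 h2.
have e1 : eqv (LB (D *m g')) (LB (c *: (D *m g))).
  apply: eqv_trans (eqv_sym (imgLB _ _)) _; apply: eqv_trans hc _.
  apply: eqv_trans (scale_eqv _ (imgLB _ _)) _; exact: scaleLB.
have [U [hU eU]] := LB_sub_mat (fun x => (e1 x).1).
have [U' [hU' eU']] := LB_sub_mat (fun x => (e1 x).2).
have uDg : (D *m g) \in unitmx by rewrite unitmx_mul uD ug.
have eUU : U' *m U = 1%:M.
  have : c *: (D *m g) = c *: ((U' *m U) *m (D *m g)).
    by rewrite {1}eU' eU -!scalemxAr mulmxA.
  move/(scalerI nc) => e.
  by rewrite -[U' *m U](mulmxK uDg) -e mulmxV.
have ed := congr1 det2 eUU; rewrite det2M det2_1 mulrC in ed.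
have [nd vd] := unit_prod (det2_ge hU) (det2_ge hU') ed.
exists c, U; do 4 (split => //).
by rewrite mulmxA eU -scalemxAr -scalemxAl [U *m (D *m g)]mulmxA mulmxK.
Qed.

Lemma intM_of1 (A : 'M[F]_2) : intM 1 (A - 1%:M) -> intM 0 A.
Proof.
move=> h; have -> : A = (A - 1%:M) + 1%:M by rewrite subrK.
by apply: intM_add; [apply: (intM_le _ h); lia|exact: intM1].
Qed.

Lemma forward (f : vertex v -> vertex v) :
  (forall n : int, exists x : F, x != 0 /\ v x = n) ->
  (forall u : nat -> F,
     (forall N : int, exists M : nat, forall m n : nat, (M <= m)%N -> (M <= n)%N ->
        u m = u n \/ N <= v (u m - u n)) ->
     exists l : F, forall N : int, exists M : nat, forall n : nat, (M <= n)%N ->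
        u n = l \/ N <= v (u n - l)) ->
  (forall e : nat, (1 <= e)%N -> Ghat e f) -> inPGL f.
Proof.
move=> vS vC hf.
have [pi [np vp]] := vS 1.
have [sE1 [sE2 [dE iE]]] := strictE np vp (or_intror (erefl (Eb pi))).
have uE : Eb pi \in unitmx by apply: det2_unitmx; rewrite dE.
have hx1 : sval (mkv (LB_lat uE)) (LB (Eb pi *m 1%:M)) by rewrite mulmx1; exact: mkv_in.
have a10 : adj (mkv (LB_lat uE)) x0 := adj_step u1 sE1 sE2 np vp (mkv_in _) hx1.
have hg : forall n : nat, exists g, g \in unitmx /\ forall y, (exists k, (k <= n.+1)%N /\ walk y x0 k) ->
    forall L, sval y L -> sval (f y) (img_set g L).
  move=> n; have [_ hG] := hf n.+1 isT.
  have [f' [[g [ug ind]] agree]] := hG _ _ a10.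
  exists g; split => // y hy L hL; rewrite agree; [exact: ind|by right].
pose gs n := proj1_sig (constructive_indefinite_description _ (hg n)).
have ugs : forall n, gs n \in unitmx.
  by move=> n; case: (proj2_sig (constructive_indefinite_description _ (hg n))).
have ags : forall n y, (exists k, (k <= n.+1)%N /\ walk y x0 k) ->
    forall L, sval y L -> sval (f y) (img_set (gs n) L).
  by move=> n; case: (proj2_sig (constructive_indefinite_description _ (hg n))).
have stab : forall n D k, intM 0 D -> det2 D != 0 -> v (det2 D) = k%:Z -> (k <= n.+1)%N ->
    stabD D (gs n.+1 *m invmx (gs n)).
  move=> n D k hD nD vD kn.
  have uD := det2_unitmx nD.
  have w := conn np vp hD nD vD (mkv_in (LB_lat uD)).
  apply: (agree_stab (w := f (mkv (LB_lat uD)))) => //.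
    by apply: ags; [exists k|exact: mkv_in].
  by apply: ags; [exists k; split => //; apply: leq_trans kn _|exact: mkv_in].
have hS : forall n : nat, exists sX : F * 'M[F]_2, sX.1 != 0 /\ intM n.+1 sX.2 /\
    gs n.+1 = sX.1 *: ((1%:M + sX.2) *m gs n).
  move=> n.
  have [nq vq] := vX n.+1 np vp.
  have g1 := ge1 (lexx (0:int)).
  have hq : ge 0 (pi ^+ n.+1) by right; rewrite vq.
  have [s [X [ns [hX eh]]]] : exists s X, s != 0 /\ intM n.+1 X /\
      gs n.+1 *m invmx (gs n) = s *: (1%:M + X).
    apply: (S_lemma nq vq) => //.
    - by apply: (stab n 1%:M 0%N) => //; [exact: intM1|rewrite det2_1 oner_neq0|rewrite det2_1 v1].
    - apply: (stab n _ n.+1) => //; first by apply: intM_mk2 => //; (exact: ge0 || exact: g1).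
        by rewrite /det2 !mxE /= mul0r subr0 mul1r.
      by rewrite /det2 !mxE /= mul0r subr0 mul1r.
    - apply: (stab n _ n.+1) => //; first by apply: intM_mk2 => //; (exact: ge0 || exact: g1).
        by rewrite /det2 !mxE /= mul0r subr0 mulr1.
      by rewrite /det2 !mxE /= mul0r subr0 mulr1.
    - apply: (stab n _ n.+1) => //; first by apply: intM_mk2 => //; (exact: ge0 || exact: g1).
        by rewrite /det2 !mxE /= mulr0 subr0 mul1r.
      by rewrite /det2 !mxE /= mulr0 subr0 mul1r.
  exists (s, X); split => //; split => //=.
  by rewrite scalemxAl -eh mulmxKV.
pose sX n := proj1_sig (constructive_indefinite_description _ (hS n)).
have hsX : forall n, (sX n).1 != 0 /\ intM n.+1 (sX n).2 /\
    gs n.+1 = (sX n).1 *: ((1%:M + (sX n).2) *m gs n).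
  by move=> n; exact: proj2_sig (constructive_indefinite_description _ (hS n)).
pose P := fix P (n : nat) : 'M[F]_2 := match n with 0 => 1%:M | m.+1 => (1%:M + (sX m).2) *m P m end.
pose sg := fix sg (n : nat) : F := match n with 0 => 1 | m.+1 => (sX m).1 * sg m end.
have Psg : forall n, sg n != 0 /\ gs n = sg n *: (P n *m gs 0).
  elim=> [|n [ns IH]] /=; first by rewrite oner_neq0 mul1mx scale1r.
  have [n1 [_ e]] := hsX n.
  split; first by rewrite mulf_neq0.
  by rewrite e IH -scalemxAr scalerA mulmxA.
have Pint : forall n, intM 1 (P n - 1%:M).
  elim=> [|n IH] /=; first by rewrite subrr; exact: intM0.
  have [_ [hX _]] := hsX n.
  have hP : intM 0 (P n) by exact: intM_of1.
  have -> : (1%:M + (sX n).2) *m P n - 1%:M = (P n - 1%:M) + (sX n).2 *m P n.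
    by rewrite mulmxDl mul1mx addrAC.
  apply: intM_add => //; apply: intM_le (intM_mul hX hP); lia.
have Pstep : forall n, intM n.+1 (P n.+1 - P n).
  move=> n /=; have [_ [hX _]] := hsX n.
  have hP : intM 0 (P n) by exact: intM_of1 (Pint n).
  rewrite mulmxDl mul1mx addrAC subrr add0r.
  by have := intM_mul hX hP; rewrite addr0.
have Pcauchy : forall n (d : nat), intM n%:Z (P (n + d)%N - P n).
  move=> n; elim=> [|d IH]; first by rewrite addn0 subrr; exact: intM0.
  have -> : P (n + d.+1)%N - P n = (P (n + d).+1 - P (n + d)%N) + (P (n + d)%N - P n).
    by rewrite addnS addrA subrK.
  apply: intM_add => //; apply: intM_le (Pstep _); lia.
have Pc : forall n m i j, (n <= m)%N -> ge n%:Z (P m i j - P n i j).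
  move=> n m i j nm; have := Pcauchy n (m - n)%N; rewrite subnKC // => h.
  by have := h i j; rewrite !mxE.
have hlim : forall i j, exists l : F, forall N : int, exists M : nat, forall n : nat, (M <= n)%N ->
    P n i j = l \/ N <= v (P n i j - l).
  move=> i j; apply: vC => N; exists `|N|%N => m n hm hn.
  have hgN : ge N (P m i j - P n i j).
    have [nm|mn] := leqP n m.
      by apply: ge_le (Pc n m i j nm); lia.
    have := geN (Pc m n i j (ltnW mn)); rewrite opprB => h.
    by apply: ge_le h; lia.
  case: hgN => [e|h]; [left; exact: subr0_eq|by right].
pose lim i j := proj1_sig (constructive_indefinite_description _ (hlim i j)).
have hl : forall i j N, exists M : nat, forall n : nat, (M <= n)%N -> P n i j = lim i j \/ N <= v (P n i j - lim i j).
  by move=> i j; exact: proj2_sig (constructive_indefinite_description _ (hlim i j)).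
pose Pinf := \matrix_(i, j) lim i j.
have Plim : forall n, intM n%:Z (Pinf - P n).
  move=> n i j; rewrite !mxE.
  have [M hM] := hl i j n.
  have h1 : ge n (P (maxn M n) i j - lim i j).
    case: (hM _ (leq_maxl M n)) => [->|h]; [rewrite subrr; exact: ge0|by right].
  have h2 := Pc n (maxn M n) i j (leq_maxr M n).
  have -> : lim i j - P n i j = (P (maxn M n) i j - P n i j) - (P (maxn M n) i j - lim i j) by ring.
  exact: geB.
have keyY : forall n, (1 <= n)%N -> exists Y, intM n%:Z Y /\ Pinf *m gs 0 = (sg n)^-1 *: ((1%:M + Y) *m gs n).
  move=> n n1.
  have [Y' [hY' [e1 e2]]] := inv1D (lexx 1) (Pint n).
  have eP : 1%:M + (P n - 1%:M) = P n by rewrite addrC subrK.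
  rewrite eP in e1 e2.
  have hI : intM 0 (1%:M + Y') by apply: intM_add; [exact: intM1|exact: intM_le ler01 hY'].
  exists ((Pinf - P n) *m (1%:M + Y')); split.
    by have := intM_mul (Plim n) hI; rewrite addr0.
  have [ns eg] := Psg n.
  rewrite eg -scalemxAr scalerA mulVf // scale1r mulmxA.
  congr (_ *m _); rewrite mulmxDl mul1mx -mulmxA e1 mulmx1; by rewrite addrC subrK.
exists (Pinf *m gs 0); split.
  have [Y [hY eY]] := keyY 1%N isT.
  have [Y' [_ [_ e2]]] := inv1D (lexx 1) hY.
  rewrite eY unitmxZ ?unitfE ?invr_eq0; last by case: (Psg 1%N).
  rewrite unitmx_mul ugs andbT; by case: (mulmx1_unit e2).
move=> y L hL.
have [k wk] := conn_all y np vp.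
have [Ls [hLs bLs]] := walkW wk.
have [Y [hY eY]] := keyY k.+1 isT.
have [ns _] := Psg k.+1.
have fs : sval (f y) (img_set (gs k.+1) Ls).
  apply: ags hLs; exists k; split => //; apply: leq_trans (leqnSn _) (leqnSn _).
have hG : sval (f y) (img_set (Pinf *m gs 0) Ls).
  have ni : (sg k.+1)^-1 != 0 by rewrite invr_eq0.
  rewrite eY; apply: class_eqv (class_scale fs ni) _.
  apply: eqv_sym; apply: eqv_trans (imgZ _ _ _) _; apply: scale_eqv.
  apply: eqv_trans (eqv_sym (img_img _ _ _)) _; apply: img_eqv.
  apply: (fixT bLs) hY; lia.
have [c [nc hc]] := class_same hLs hL.
apply: class_eqv (class_scale hG nc) _.
apply: eqv_trans (scale_img _ _ _) _; apply: img_eqv; exact: eqv_sym hc.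
Qed.


Lemma Ghat_mono e (f : vertex v -> vertex v) : Ghat e.+1 f -> Ghat e f.
Proof.
case=> hA hB; split => // x1 x2 a.
have [f' [hf' ag]] := hB _ _ a; exists f'; split => // y hy; apply: ag.
by case: hy => [[k [hk w]]|[k [hk w]]]; [left|right]; exists k; split => //; apply: leq_trans hk (leqnSn _).
Qed.

Lemma pgl_Ghat e (f : vertex v -> vertex v) : inPGL f -> Ghat e f.
Proof. move=> hf; split; [exact: pgl_isAut|by move=> x1 x2 _; exists f]. Qed.

End Main.

Theorem mainTheorem4 (F : fieldType) (v : F -> int)
  (hF : is_nonarch_local_field v) :
  (forall f : vertex v -> vertex v,
      (forall e : nat, (1 <= e)%N -> Ghat e f) <-> inPGL f) /\
  (forall e : nat, (1 <= e)%N ->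
     (forall f : vertex v -> vertex v, inPGL f -> Ghat e.+1 f) /\
     (forall f : vertex v -> vertex v, Ghat e.+1 f -> Ghat e f) /\
     (forall f : vertex v -> vertex v, Ghat e f -> isAut f)).
Proof.
case: hF => vM [vU [vS [vC _]]].
split.
  move=> f; split; first exact: (forward vM vU vS vC).
  by move=> hf e _; exact: pgl_Ghat.
move=> e he; split; [|split].
- by move=> f hf; exact: pgl_Ghat.
- by move=> f; exact: Ghat_mono.
- by move=> f [].
Qed.
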